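(* Let $n \geq 2$ and let $(x_i, y_i)_{i=1}^n$ be labeled examples with $x_i \in \mathbb{R}^d$, $y_i \in \{-1,+1\}$ and $\max_i \|x_i\| \leq 1$. Let $X = [x_1,\dots,x_n] \in \mathbb{R}^{d\times n}$ and let $\sigma^2$ satisfy $\sigma^2 \geq \frac{1}{n}\|X\|^2$ (spectral norm). For $b \in \{1,\dots,n\}$ set $\beta_b := 1 + \frac{(b-1)(n\sigma^2-1)}{n-1}$. For $w \in \mathbb{R}^d$ and $A \subseteq \{1,\dots,n\}$ with $|A| = b$ define $$\nabla \hat{L}_A(w) := -\frac{1}{b}\sum_{i\in A} \chi_i(w)\, y_i x_i,$$ where $\chi_i(w) = 1$ if $y_i\langle w, x_i\rangle < 1$ and $\chi_i(w)=0$ otherwise. Then for every $w \in \mathbb{R}^d$, if $A$ is drawn uniformly at random among all subsets of $\{1,\dots,n\}$ of cardinality $b$, $$\mathbb{E}\big[\|\nabla \hat{L}_A(w)\|^2\big] \leq \frac{\beta_b}{b}.$$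
   Context: $\nabla \hat{L}_A(w)$ is a subgradient of the average hinge loss $\hat{L}_A(w) = \frac{1}{b}\sum_{i\in A}\max\{0, 1 - y_i\langle w, x_i\rangle\}$. $\|X\|$ is the spectral norm of $X$. *)

(* Defs.v *)
From HB Require Import structures.
From mathcomp Require Import all_boot all_order all_algebra.
From mathcomp Require Import classical_sets reals.
Set Implicit Arguments. Unset Strict Implicit. Unset Printing Implicit Defensive.
Import Order.TTheory GRing.Theory Num.Theory.
Local Open Scope ring_scope.
Local Open Scope classical_set_scope.

Definition dotv {R : pzRingType} {d : nat} (u v : 'cV[R]_d) : R :=
  \sum_(k < d) u k 0 * v k 0.

Definition normv {R : rcfType} {d : nat} (u : 'cV[R]_d) : R :=
  Num.sqrt (dotv u u).

Definition spectral_norm {R : realType} {d n : nat} (X : 'M[R]_(d, n)) : R :=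
  sup [set normv (X *m v) | v in [set v : 'cV[R]_n | normv v <= 1]].

Definition chi {R : realType} {d n : nat} (X : 'M[R]_(d, n)) (y : 'I_n -> R)
  (w : 'cV[R]_d) (i : 'I_n) : R :=
  if y i * dotv w (col i X) < 1 then 1 else 0.

Definition grad_hinge {R : realType} {d n : nat} (X : 'M[R]_(d, n))
  (y : 'I_n -> R) (w : 'cV[R]_d) (b : nat) (A : {set 'I_n}) : 'cV[R]_d :=
  - ((b%:R)^-1 *: \sum_(i in A) ((chi X y w i * y i) *: col i X)).

Definition unif_subset_expect {R : realType} {n : nat} (b : nat)
  (f : {set 'I_n} -> R) : R :=
  (#|[set A : {set 'I_n} | #|A| == b]|%:R)^-1 *
    \sum_(A : {set 'I_n} | #|A| == b) f A.

Definition beta_b {R : realType} (n b : nat) (sigma2 : R) : R :=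
  1 + ((b%:R - 1) * (n%:R * sigma2 - 1)) / (n%:R - 1).

(* Main.v *)
Require Import Defs.
From HB Require Import structures.
From mathcomp Require Import all_boot all_order all_algebra all_fingroup.
From mathcomp Require Import classical_sets reals ring lra.
Import Order.TTheory GRing.Theory Num.Theory.
Local Open Scope ring_scope.

Section Comb.
Variables (R : realType) (n b : nat).

Definition Mc (i j : 'I_n) : R :=
  \sum_(A : {set 'I_n} | #|A| == b) ((i \in A) && (j \in A))%:R.

Lemma Mc_perm (s : {perm 'I_n}) i j : Mc (s i) (s j) = Mc i j.
Proof.
rewrite /Mc (reindex_inj (imset_inj (@perm_inj _ s))) /=.
apply: eq_big => [A|A _]; first by rewrite card_imset //; exact: perm_inj.
by rewrite !mem_imset //; exact: perm_inj.
Qed.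

Lemma Mc_diag i i' : Mc i i = Mc i' i'.
Proof. by rewrite -(Mc_perm (tperm i i')) tpermL. Qed.

Lemma Mc_off i j i' j' : i != j -> i' != j' -> Mc i j = Mc i' j'.
Proof.
move=> hij hij'.
rewrite -(Mc_perm (tperm i i')) tpermL.
set t := tperm i i' j.
have ht : i' != t.
  rewrite /t -{1}(tpermL i i'); apply/eqP => /perm_inj /eqP; by rewrite (negPf hij).
by rewrite -(Mc_perm (tperm j' t)) tpermR tpermD // eq_sym.
Qed.

Lemma natr_andb (p q : bool) : ((p && q)%:R : R) = p%:R * q%:R.
Proof. by case: p; case: q; rewrite ?mulr1 ?mulr0 ?mul0r. Qed.

Lemma sum_in_card (A : {set 'I_n}) : \sum_i ((i \in A)%:R : R) = #|A|%:R.
Proof.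
rewrite -sumr_const [RHS]big_mkcond /=.
by apply: eq_bigr => i _; case: (i \in A).
Qed.

Lemma big_sets_split (F : 'I_n -> 'I_n -> R) :
  \sum_(A : {set 'I_n} | #|A| == b) \sum_i \sum_j ((i \in A) && (j \in A))%:R * F i j
  = \sum_i \sum_j Mc i j * F i j.
Proof.
rewrite exchange_big /=; apply: eq_bigr => i _.
rewrite exchange_big /=; apply: eq_bigr => j _.
by rewrite /Mc mulr_suml.
Qed.

Lemma Mc_split (F : 'I_n -> 'I_n -> R) (i0 i1 : 'I_n) : i0 != i1 ->
  \sum_i \sum_j Mc i j * F i j =
  Mc i0 i1 * \sum_i \sum_j F i j + (Mc i0 i0 - Mc i0 i1) * \sum_i F i i.
Proof.
move=> h01.
rewrite mulr_sumr mulr_sumr -big_split /=; apply: eq_bigr => i _.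
rewrite mulr_sumr (bigD1 i) //= [in RHS](bigD1 i) //= (Mc_diag i i0).
rewrite [RHS]addrAC -mulrDl [_ + (_ - _)]addrC subrK; congr (_ + _).
by apply: eq_bigr => j hj; rewrite (@Mc_off i j i0 i1) // eq_sym.
Qed.

Definition Nc : R := #|[set A : {set 'I_n} | #|A| == b]|%:R.

Lemma sum_sets_const (c : R) : \sum_(A : {set 'I_n} | #|A| == b) c = c * Nc.
Proof.
rewrite /Nc mulr_natr -sumr_const; apply: eq_bigl => A; by rewrite inE.
Qed.

Lemma Mc_diag_sum i0 : n%:R * Mc i0 i0 = b%:R * Nc.
Proof.
have -> : n%:R * Mc i0 i0 = \sum_i Mc i i.
  by rewrite (eq_bigr (fun _ => Mc i0 i0)) ?sumr_const ?card_ord ?mulr_natl // => i _; apply: Mc_diag.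
rewrite /Mc exchange_big /= -sum_sets_const; apply: eq_bigr => A /eqP hA.
by rewrite (eq_bigr (fun i => (i \in A)%:R)) ?sum_in_card ?hA // => i _; rewrite andbb.
Qed.

Lemma Mc_tot i0 i1 : i0 != i1 ->
  Mc i0 i1 * (n%:R * n%:R) + (Mc i0 i0 - Mc i0 i1) * n%:R = b%:R * b%:R * Nc.
Proof.
move=> h.
have := @Mc_split (fun _ _ => 1) i0 i1 h.
have e1 : \sum_(i < n) (1:R) = n%:R by rewrite sumr_const card_ord.
have e2 : \sum_(i < n) \sum_(j < n) (1:R) = n%:R * n%:R.
  by rewrite (eq_bigr (fun _ => n%:R)) // sumr_const card_ord mulr_natl.
rewrite e2 e1 => <-.
rewrite -big_sets_split -sum_sets_const; apply: eq_bigr => A /eqP hA.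
under eq_bigr do under eq_bigr do rewrite mulr1 natr_andb.
rewrite -hA -(sum_in_card A) mulr_suml; apply: eq_bigr => i _.
by rewrite mulr_sumr.
Qed.

End Comb.

Section Geo.
Variables (R : realType) (d : nat).
Implicit Types u v : 'cV[R]_d.

Lemma dotvC u v : dotv u v = dotv v u.
Proof. by apply: eq_bigr => k _; rewrite mulrC. Qed.

Lemma dotvZ (c : R) u v : dotv (c *: u) v = c * dotv u v.
Proof. by rewrite /dotv mulr_sumr; apply: eq_bigr => k _; rewrite mxE mulrA. Qed.

Lemma dotvN u v : dotv (- u) v = - dotv u v.
Proof. by rewrite -scaleN1r dotvZ mulN1r. Qed.

Lemma dotv_sum (I : finType) (P : pred I) (g : I -> 'cV[R]_d) v :
  dotv (\sum_(i | P i) g i) v = \sum_(i | P i) dotv (g i) v.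
Proof.
rewrite /dotv; under eq_bigr do rewrite summxE mulr_suml.
by rewrite exchange_big.
Qed.

Lemma dotv_ge0 u : 0 <= dotv u u.
Proof. by apply: sumr_ge0 => k _; rewrite -expr2 sqr_ge0. Qed.

Lemma normv_sq u : normv u ^+ 2 = dotv u u.
Proof. by rewrite /normv sqr_sqrtr // dotv_ge0. Qed.

Lemma dotv_le1 u : normv u <= 1 -> dotv u u <= 1.
Proof.
move=> h; rewrite -normv_sq; apply: exprn_ile1 => //; exact: sqrtr_ge0.
Qed.

Lemma entry_le1 u k : dotv u u <= 1 -> `|u k 0| <= 1.
Proof.
move=> h; rewrite -sqrtr_sqr -sqrtr1 ler_sqrt //.
apply: le_trans h; rewrite /dotv (bigD1 k) //= -expr2 lerDl.
by apply: sumr_ge0 => j _; rewrite -expr2 sqr_ge0.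
Qed.

End Geo.

Section Spec.
Variables (R : realType) (d n : nat) (X : 'M[R]_(d, n)).

Let E : set R := [set normv (X *m v) | v in [set v : 'cV[R]_n | normv v <= 1]].

Lemma E_has_sup : has_sup E.
Proof.
split.
  exists (normv (X *m 0)); exists 0 => //=.
  by rewrite /normv /dotv big1 ?sqrtr0 // => k _; rewrite mxE mul0r.
pose a k := \sum_j `|X k j|.
exists (Num.sqrt (\sum_k a k ^+ 2)) => z [v hv <-].
rewrite /normv ler_sqrt; last by apply: sumr_ge0 => k _; rewrite sqr_ge0.
apply: ler_sum => k _; rewrite mxE expr2.
have hb : `|\sum_j X k j * v j 0| <= a k.
  apply: le_trans (ler_norm_sum _ _ _) _; apply: ler_sum => j _.
  rewrite normrM -[X in _ <= X]mulr1; apply: ler_wpM2l => //.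
  by apply: entry_le1; apply: dotv_le1.
move: hb; rewrite ler_norml => /andP [h1 h2]; nra.
Qed.

Lemma spec_bound v : normv v <= 1 -> normv (X *m v) <= spectral_norm X.
Proof.
move=> hv; apply: (sup_upper_bound E_has_sup); by exists v.
Qed.

Lemma spec_bound_n v : (0 < n)%N -> dotv v v <= n%:R ->
  dotv (X *m v) (X *m v) <= n%:R * spectral_norm X ^+ 2.
Proof.
move=> hn hv.
have hn0 : 0 < (n%:R : R) by rewrite ltr0n.
pose a := (Num.sqrt (n%:R : R))^-1.
have ha2 : a ^+ 2 = (n%:R)^-1 by rewrite exprVn sqr_sqrtr // ltW.
have hu : normv (a *: v) <= 1.
  rewrite /normv -sqrtr1 ler_sqrt // dotvZ dotvC dotvZ mulrA -expr2 ha2.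
  by rewrite ler_pdivrMl // mulr1.
have h1 := spec_bound _ hu.
have h2 : normv (X *m (a *: v)) ^+ 2 <= spectral_norm X ^+ 2.
  rewrite !expr2; apply: ler_pM => //; exact: sqrtr_ge0.
move: h2; rewrite normv_sq -scalemxAr dotvZ dotvC dotvZ mulrA -expr2 ha2.
by rewrite ler_pdivrMl.
Qed.

End Spec.

Lemma final_arith (R : realType) (nr br N c1 c2 s2 S2 T Sd : R) :
 2 <= nr -> 1 <= br -> br <= nr -> 0 < N ->
 nr * c1 = br * N ->
 c2 * (nr * nr) + (c1 - c2) * nr = br * br * N ->
 Sd <= nr -> T <= nr * S2 -> S2 / nr <= s2 ->
 N^-1 * ((br ^+ 2)^-1 * (c2 * T + (c1 - c2) * Sd)) <=
 (1 + ((br - 1) * (nr * s2 - 1)) / (nr - 1)) / br.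
Proof.
move=> hn hb1 hbn hN e1 e2 hSd hT hS.
have nr0 : nr != 0 by apply/eqP; lra.
have nr10 : nr - 1 != 0 by apply/eqP; lra.
have br0 : br != 0 by apply/eqP; lra.
have N0 : N != 0 by apply/eqP; lra.
have hc1 : c1 = br * N / nr by rewrite -e1; field.
have hc2 : c2 = br * (br - 1) * N / (nr * (nr - 1)).
  apply: (mulIf (_ : nr * (nr - 1) != 0)); first by rewrite mulf_neq0.
  rewrite divfK ?mulf_neq0 //.
  have : c2 * (nr * (nr - 1)) = br * br * N - nr * c1 by rewrite -e2; ring.
  by move=> ->; rewrite e1; ring.
have hc2p : 0 <= c2.
  rewrite hc2; apply: divr_ge0; last by apply: mulr_ge0; lra.
  by apply: mulr_ge0; [apply: mulr_ge0|]; lra.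
have hc12 : 0 <= c1 - c2.
  have -> : c1 - c2 = br * N * (nr - br) / (nr * (nr - 1)).
    by rewrite hc1 hc2; field; rewrite nr0 nr10.
  apply: divr_ge0; last by apply: mulr_ge0; lra.
  by apply: mulr_ge0; [apply: mulr_ge0|]; lra.
have hS2 : S2 <= nr * s2 by rewrite -ler_pdivrMl; lra.
have hK : c2 * T + (c1 - c2) * Sd <= c2 * (nr * (nr * s2)) + (c1 - c2) * nr.
  apply: lerD; apply: ler_wpM2l => //.
  apply: le_trans hT _; apply: ler_wpM2l => //; lra.
apply: le_trans (_ : _ <= N^-1 * ((br ^+ 2)^-1 * (c2 * (nr * (nr * s2)) + (c1 - c2) * nr))) _.
  apply: ler_wpM2l; first by rewrite invr_ge0; lra.
  apply: ler_wpM2l => //; rewrite invr_ge0; apply: exprn_ge0; lra.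
rewrite le_eqVlt; apply/orP; left; apply/eqP.
rewrite hc1 hc2; field.
by rewrite nr0 nr10 br0 N0.
Qed.

Lemma card_cset (T : finType) (P : pred T) :
  #|[set x | P x]%classic| = #|[set x | P x]|.
Proof.
apply: eq_card => x; rewrite inE.
apply/idP/idP; rewrite in_setE /= //.
Qed.

Theorem lemma2 (R : realType) (d n : nat) (X : 'M[R]_(d, n)) (y : 'I_n -> R)
  (sigma2 : R) (b : nat) (w : 'cV[R]_d) :
  (2 <= n)%N ->
  (forall i : 'I_n, y i = 1 \/ y i = -1) ->
  (forall i : 'I_n, normv (col i X) <= 1) ->
  spectral_norm X ^+ 2 / n%:R <= sigma2 ->
  (1 <= b <= n)%N ->
  unif_subset_expect b (fun A => normv (grad_hinge X y w b A) ^+ 2)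
    <= beta_b n b sigma2 / b%:R.
Proof.
move=> hn hy hx hS /andP [hb1 hbn].
pose c i := chi X y w i * y i.
pose g i := c i *: col i X.
pose D i j := dotv (g i) (g j).
have hc i : c i * c i <= 1.
  rewrite /c /chi; case: ifP => _; case: (hy i) => ->; lra.
have hgrad A : normv (grad_hinge X y w b A) ^+ 2 =
    (b%:R ^+ 2)^-1 * \sum_i \sum_j ((i \in A) && (j \in A))%:R * D i j.
  rewrite normv_sq /grad_hinge dotvN dotvC dotvN opprK dotvZ dotvC dotvZ mulrA -expr2 exprVn.
  congr (_ * _).
  rewrite dotv_sum big_mkcond /=; apply: eq_bigr => i _.
  rewrite dotvC dotv_sum big_mkcond /=.
  case: (i \in A) => /=; last by rewrite big1 // => j _; rewrite mul0r.
  apply: eq_bigr => j _; case: (j \in A); rewrite /= ?mul1r ?mul0r //.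
  by rewrite /D /g /c dotvC.
rewrite /unif_subset_expect.
under eq_bigr do rewrite hgrad.
rewrite -mulr_sumr big_sets_split.
have n0 : (0 < n)%N by apply: leq_trans hn.
have n1 : (1 < n)%N by [].
pose i0 : 'I_n := Ordinal n0.
pose i1 : 'I_n := Ordinal n1.
have h01 : i0 != i1 by [].
rewrite (@Mc_split R n b D i0 i1 h01).
rewrite /beta_b card_cset.
apply: (@final_arith R n%:R b%:R (Nc R n b) (Mc R n b i0 i0) (Mc R n b i0 i1)
          sigma2 (spectral_norm X ^+ 2)).
- by rewrite ler_nat.
- by rewrite ler1n.
- by rewrite ler_nat.
- by rewrite /Nc card_draws card_ord ltr0n bin_gt0.
- exact: Mc_diag_sum.
- exact: Mc_tot.
- have e : \sum_(i < n) (1:R) = n%:R by rewrite sumr_const card_ord.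
  rewrite -e; apply: ler_sum => i _.
  rewrite /D /g dotvZ dotvC dotvZ mulrA; apply: mulr_ile1 => //.
  + by rewrite -expr2 sqr_ge0.
  + exact: dotv_ge0.
  + exact: dotv_le1.
- pose v : 'cV[R]_n := \col_i c i.
  have hv : \sum_i g i = X *m v.
    apply/matrixP => k l; rewrite summxE !mxE; apply: eq_bigr => i _.
    by rewrite !mxE mulrC.
  have -> : \sum_i \sum_j D i j = dotv (X *m v) (X *m v).
    rewrite -hv dotv_sum; apply: eq_bigr => i _.
    by rewrite dotvC dotv_sum; apply: eq_bigr => j _; rewrite /D dotvC.
  apply: spec_bound_n => //.
  have e : \sum_(i < n) (1:R) = n%:R by rewrite sumr_const card_ord.
  rewrite /dotv -e; by apply: ler_sum => i _; rewrite mxE.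
- exact: hS.
Qed.
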